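(* Let $G$ be a $\mathbb{Q}$-group. Then for every $m\ge1$ and every $w\in F_m\setminus[F_m,F_m]$, the word map $w\colon G^m\to G$ is surjective.
   Context: A $\mathbb{Q}$-group is a group together with a map $G\times\mathbb{Q}\to G$, $(g,a)\mapsto g^a$, such that for all $g,h\in G$, $a,b\in\mathbb{Q}$: $g^0=e$, $g^1=g$, $e^a=e$; $g^{a+b}=g^ag^b$, $(g^a)^b=g^{ab}$; $(hgh^{-1})^a=hg^ah^{-1}$; and if $gh=hg$ then $(gh)^a=g^ah^a$. $F_m$ is the free group on $x_1,\dots,x_m$, and $w\in F_m$ defines the word map $G^m\to G$ obtained by substituting $x_i\mapsto g_i$. *)

(* Defs.v *)
From mathcomp Require Import all_boot all_algebra.
Set Implicit Arguments. Unset Strict Implicit. Unset Printing Implicit Defensive.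
Import GRing.Theory Num.Theory.
Local Open Scope ring_scope.

Record Group := {
  gcar :> Type;
  gmul : gcar -> gcar -> gcar;
  gone : gcar;
  ginv : gcar -> gcar;
  gmulA : forall x y z, gmul x (gmul y z) = gmul (gmul x y) z;
  gmul1l : forall x, gmul gone x = x;
  gmul1r : forall x, gmul x gone = x;
  gmulVl : forall x, gmul (ginv x) x = gone;
  gmulVr : forall x, gmul x (ginv x) = gone
}.

Record QGroup := {
  qgrp :> Group;
  qpow : qgrp -> rat -> qgrp;
  qpow0 : forall g, qpow g 0 = gone qgrp;
  qpow1 : forall g, qpow g 1 = g;
  qpow_e : forall a, qpow (gone qgrp) a = gone qgrp;
  qpowD : forall g (a b : rat), qpow g (a + b) = gmul (qpow g a) (qpow g b);
  qpowM : forall g (a b : rat), qpow (qpow g a) b = qpow g (a * b);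
  qpowJ : forall g h a,
    qpow (gmul h (gmul g (ginv h))) a = gmul h (gmul (qpow g a) (ginv h));
  qpow_comm : forall g h a, gmul g h = gmul h g ->
    qpow (gmul g h) a = gmul (qpow g a) (qpow h a)
}.

(* Words in the letters x_1^{+-1}, ..., x_m^{+-1}: (i, false) is x_i and
   (i, true) is x_i^{-1}.  Elements of the free group F_m are words modulo
   free equivalence [freeq]. *)
Definition word (m : nat) := seq ('I_m * bool).

Inductive freeq (m : nat) : word m -> word m -> Prop :=
| freeq_refl u : freeq u u
| freeq_sym u v : freeq u v -> freeq v u
| freeq_trans u v w : freeq u v -> freeq v w -> freeq u w
| freeq_cancel u v (i : 'I_m) (b : bool) :
    freeq (u ++ [:: (i, b); (i, ~~ b)] ++ v) (u ++ v).

Definition word_inv (m : nat) (u : word m) : word m :=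
  rev (map (fun p => (p.1, ~~ p.2)) u).

Definition word_comm (m : nat) (u v : word m) : word m :=
  word_inv u ++ word_inv v ++ u ++ v.

(* w lies in the commutator subgroup [F_m, F_m], i.e. w is (freely equal to)
   a product of commutators (inverses of commutators are commutators). *)
Definition in_commutator (m : nat) (w : word m) : Prop :=
  exists s : seq (word m * word m),
    freeq w (flatten (map (fun p => word_comm p.1 p.2) s)).

Definition word_map (G : Group) (m : nat) (w : word m) (g : 'I_m -> G) : G :=
  foldr (fun p acc => gmul (if p.2 then ginv (g p.1) else g p.1) acc)
        (gone G) w.

(* Main.v *)
Require Import Defs.
From mathcomp Require Import all_boot all_algebra.
From mathcomp Require Import lra zify.
Set Implicit Arguments. Unset Strict Implicit.
Import GRing.Theory Num.Theory.

Section Comb.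
Variable m : nat.
Implicit Types u v a b p q : word m.

Lemma freeq_catl a b c : freeq b c -> freeq (a ++ b) (a ++ c).
Proof.
elim=> [u|u v _ IH|u v w _ IH1 _ IH2|u v i bb].
- exact: freeq_refl.
- exact: freeq_sym.
- exact: freeq_trans IH1 IH2.
- by rewrite !catA -(catA (a ++ u)); apply: freeq_cancel.
Qed.

Lemma freeq_catr a b c : freeq b c -> freeq (b ++ a) (c ++ a).
Proof.
elim=> [u|u v _ IH|u v w _ IH1 _ IH2|u v i bb].
- exact: freeq_refl.
- exact: freeq_sym.
- exact: freeq_trans IH1 IH2.
- by rewrite -!catA; apply: freeq_cancel.
Qed.

Lemma freeq_cat a b c d : freeq a b -> freeq c d -> freeq (a ++ c) (b ++ d).
Proof.
move=> H1 H2; apply: freeq_trans (freeq_catr _ H1) (freeq_catl _ H2).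
Qed.

Lemma word_inv_cat u v : word_inv (u ++ v) = word_inv v ++ word_inv u.
Proof. by rewrite /word_inv map_cat rev_cat. Qed.

Lemma word_invK u : word_inv (word_inv u) = u.
Proof.
rewrite /word_inv map_rev revK -map_comp -[RHS]map_id.
by apply: eq_map => -[i b] /=; rewrite negbK.
Qed.

Lemma word_inv_cons x u : word_inv (x :: u) = word_inv u ++ [:: (x.1, ~~ x.2)].
Proof. by rewrite -cat1s word_inv_cat. Qed.

Lemma cancel_r u : freeq (u ++ word_inv u) [::].
Proof.
elim: u => [|x u IH] /=; first exact: freeq_refl.
rewrite word_inv_cons catA -cat_cons.
apply: freeq_trans (freeq_catr _ (freeq_catl [:: x] IH)) _.
case: x => i b /=.
by have := @freeq_cancel m [::] [::] i b.
Qed.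

Lemma cancel_l u : freeq (word_inv u ++ u) [::].
Proof. by have := cancel_r (word_inv u); rewrite word_invK. Qed.

Lemma elim_mid a u b : freeq (a ++ u ++ word_inv u ++ b) (a ++ b).
Proof.
apply: freeq_catl; rewrite catA.
by have := freeq_catr b (cancel_r u).
Qed.

Lemma elim_mid' a u b : freeq (a ++ word_inv u ++ u ++ b) (a ++ b).
Proof. by have := elim_mid a (word_inv u) b; rewrite word_invK. Qed.

Lemma conj_comm q a b :
  freeq (word_comm (word_inv q ++ a ++ q) (word_inv q ++ b ++ q))
        (word_inv q ++ word_comm a b ++ q).
Proof.
rewrite /word_comm !word_inv_cat word_invK -!catA.
set A := word_inv a; set B := word_inv b; set Q := word_inv q.
(* Q A q Q B q Q a q Q b q *)
apply: freeq_trans (freeq_catl Q (freeq_catl A (elim_mid [::] q _))) _.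
rewrite /=.
apply: freeq_trans (freeq_catl Q (freeq_catl A (freeq_catl B (elim_mid [::] q _)))) _.
rewrite /=.
apply: freeq_trans (freeq_catl Q (freeq_catl A (freeq_catl B (freeq_catl a (elim_mid [::] q _))))) _.
exact: freeq_refl.
Qed.

Definition cw (s : seq (word m * word m)) := flatten (map (fun pr : word m * word m => word_comm pr.1 pr.2) s).

Lemma key (x : 'I_m * bool) p q :
  freeq (x :: p ++ (x.1, ~~ x.2) :: q)
        (p ++ q ++ word_comm (word_inv q ++ p ++ q) (word_inv q ++ [:: (x.1, ~~ x.2)] ++ q)).
Proof.
set x' := (x.1, ~~ x.2).
apply: freeq_sym.
apply: freeq_trans (freeq_catl p (freeq_catl q (conj_comm q p [:: x']))) _.
(* p q Q K q  -> p K q *)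
apply: freeq_trans (elim_mid p q _) _.
rewrite /word_comm -!catA.
have -> : word_inv [:: x'] = [:: x] by case: x @x' => i b; rewrite /word_inv /= negbK.
apply: freeq_trans (elim_mid [::] p _) _.
exact: freeq_refl.
Qed.

Local Open Scope ring_scope.
Fixpoint es (i : 'I_m) (w : word m) : rat :=
  if w is x :: r then
    (if x.1 == i then (if x.2 then -1 else 1) else 0) + es i r
  else 0.

Lemma es_cat i u v : es i (u ++ v) = es i u + es i v.
Proof. by elim: u => [|x u IH] /=; rewrite ?add0r // IH addrA. Qed.

Lemma es_notin (i : 'I_m) (b : bool) (r : word m) : (i, ~~ b) \notin r ->
  if b then es i r <= 0 else 0 <= es i r.
Proof.
elim: r b => [|[j c] r IH] /=; first by case.
move=> b; rewrite in_cons negb_or => /andP[H1 /IH].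
case: (j =P i) => [Eji|_]; [subst j|]; case: b H1 => /=; case: c => /= H1 H; rewrite ?eqxx in H1 => //; lra.
Qed.

Lemma zero_es_comm n : forall w : word m, (size w <= n)%N ->
  (forall i, es i w = 0) -> exists s, freeq w (cw s).
Proof.
elim: n => [|n IH] [|x r] //=; try by exists [::]; exact: freeq_refl.
move=> Hs Hes.
have Hin : (x.1, ~~ x.2) \in r.
  apply/negPn/negP => Hn; have := es_notin Hn; have := Hes x.1.
  rewrite /= eqxx; case: x.2 => /=; lra.
case/splitPr: Hin Hes Hs => p q Hes Hs.
have Hpq : forall i, es i (p ++ q) = 0.
  move=> i; have := Hes i; rewrite /= !es_cat /=.
  by case: (x.1 == i); case: x.2 => /=; lra.
have [|s Hs'] := IH (p ++ q) _ Hpq.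
  by move: Hs; rewrite !size_cat /=; lia.
exists (rcons s (word_inv q ++ p ++ q, word_inv q ++ [:: (x.1, ~~ x.2)] ++ q)).
rewrite /cw map_rcons flatten_rcons.
apply: freeq_trans (key x p q) _.
rewrite catA; apply: freeq_catr Hs'.
Qed.

End Comb.

Section QG.
Variable G : QGroup.
Local Open Scope ring_scope.

Lemma qpow_inv (h : G) : ginv h = qpow h (-1).
Proof.
have E : gmul h (qpow h (-1)) = gone G.
  by rewrite -{1}(qpow1 h) -qpowD addrN qpow0.
by rewrite -[ginv h]gmul1r -E gmulA gmulVl gmul1l.
Qed.

Lemma ginv1 : ginv (gone G) = gone G.
Proof. by rewrite -[ginv _]gmul1l gmulVr. Qed.

Lemma word_map_es m (w : word m) (i : 'I_m) (h : G) :
  word_map w (fun j => if j == i then h else gone G) = qpow h (es i w).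
Proof.
elim: w => [|[j c] r IH] /=; first by rewrite qpow0.
rewrite (_ : word_map r _ = qpow h (es i r)); last exact: IH.
rewrite qpowD.
case: (j == i); case: c => /=; rewrite ?qpow0 ?qpow1 ?ginv1 ?qpow_inv ?gmul1l //.
Qed.

End QG.

Theorem lemma5p1 (G : QGroup) (m : nat) (hm : (1 <= m)%N) (w : word m) :
  ~ in_commutator w ->
  forall y : G, exists g : 'I_m -> G, word_map w g = y.
Proof.
move=> Hw y.
case: (boolP [exists i, es i w != 0%R]) => [/existsP[i Hi]|/existsPn Hall].
  exists (fun j => if j == i then qpow y ((es i w)^-1)%R else gone G).
  by rewrite word_map_es qpowM mulVf // qpow1.
exfalso; apply: Hw.
have [s Hs] := zero_es_comm (leqnn (size w)) (fun i => eqP (negPn (Hall i))).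
by exists s.
Qed.
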